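(* Let $n=p^{3}q$ with primes $2\leq p<q$. Let $\mathcal{D}_{S_{1}},\mathcal{D}_{S_{2}}$ be subsets of $\mathcal{D}_{[n]}\setminus\{n\}$. If $\mathrm{Spec}(\mathrm{ICG}(n,\mathcal{D}_{S_{1}}))=\mathrm{Spec}(\mathrm{ICG}(n,\mathcal{D}_{S_{2}}))$, then $\mathcal{D}_{S_{1}}=\mathcal{D}_{S_{2}}$.
   Context: For an integer $n\ge1$, identify $\mathbb{Z}_n$ with $[n]=\{1,\dots,n\}$ ($n$ playing the role of $0$). For a positive divisor $d$ of $n$, $G_n(d)=\{j\in[n]:\gcd(j,n)=d\}$. $\mathcal{D}_{[n]}$ denotes the set of all positive divisors of $n$. For $\mathcal{D}\subseteq\mathcal{D}_{[n]}\setminus\{n\}$, $\mathrm{ICG}(n,\mathcal{D})$ denotes the circulant graph $\mathrm{Cay}(\mathbb{Z}_n,S)$ with connection set $S=\bigcup_{d\in\mathcal{D}}G_n(d)$ (vertex set $\mathbb{Z}_n$, $g\sim h$ iff $h-g\in S$); we write $\mathcal{D}=\mathcal{D}_S$. $\mathrm{Spec}$ denotes the multiset of eigenvalues of the adjacency matrix. *)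

(* Defs.v *)
From HB Require Import structures.
From mathcomp Require Import all_boot all_order all_algebra all_field.
Set Implicit Arguments. Unset Strict Implicit. Unset Printing Implicit Defensive.
Import GRing.Theory Num.Theory.
Local Open Scope ring_scope.

(* Vertices of Z_n are the ordinals 'I_n (residues 0..n-1; residue 0 plays
   the role of n in [n]).  The difference h - g mod n is the residue
   (h + n - g) %% n, and gcd(r, n) for r = 0 is gcdn 0 n = n, consistent
   with the identification 0 <-> n.  Hence h - g \in S = U_{d in D} G_n(d)
   iff gcd((h-g) mod n, n) \in D. *)

Definition ICG_adj (n : nat) (D : seq nat) : 'M[algC]_n :=
  \matrix_(g < n, h < n) ((gcdn ((h + n - g) %% n) n \in D)%:R : algC).

Definition Spec (m : nat) (A : 'M[algC]_m) : algC -> nat :=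
  fun lambda => mup lambda (char_poly A).

(* Main.v *)
Require Import Defs.
From HB Require Import structures.
From mathcomp Require Import all_boot all_order all_algebra all_field.
From mathcomp Require Import zify.
From mathcomp.algebra_tactics Require Import ring.
Set Implicit Arguments. Unset Strict Implicit. Unset Printing Implicit Defensive.
Import GRing.Theory Num.Theory.
Local Open Scope ring_scope.

(* Proof outline:
   1. circulant matrices are diagonalised by the Fourier matrix, so the
      spectrum of ICG(n,D) is the list of lam_k = sum_s f(s) w^(sk);
   2. for n = p^3 q, lam_k only depends on the class (v_p(k) capped at 3, q|k)
      and is an explicit integer VZ;
   3. the weighted multiset of class values determines D:
      p >= 3: reduction mod q + uniqueness of subset sums of class sizes;
      p = 2 : q >= 17 by a reduction to a finite check, q <= 13 by finite checks. *)

Lemma char_poly_conj n (F G D : 'M[algC]_n) :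
  F *m G = 1%:M -> char_poly (F *m D *m G) = char_poly D.
Proof.
move=> FG.
set fF := map_mx polyC F; set fG := map_mx polyC G.
have fFG : fF *m fG = 1%:M by rewrite -map_mxM FG map_scalar_mx.
rewrite /char_poly /char_poly_mx !map_mxM -/fF -/fG.
have eqX : ('X%:M : 'M_n) = fF *m 'X%:M *m fG.
  by rewrite scalar_mxC -mulmxA fFG mulmx1.
rewrite {1}eqX -mulmxBl -mulmxBr !det_mulmx mulrC mulrA -det_mulmx.
have -> : \det (fG *m fF) = 1 by rewrite det_mulmx mulrC -det_mulmx fFG det1.
by rewrite mul1r.
Qed.

Lemma geo_sum (z : algC) m : z ^+ m = 1 ->
  \sum_(t < m) z ^+ t = if z == 1 then m%:R else 0.
Proof.
case: eqP => [->|nz1 zm].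
  by move=> _; under eq_bigr do rewrite expr1n; rewrite sumr_const card_ord.
have := subrX1 z m; rewrite zm subrr => /esym/eqP.
by rewrite mulf_eq0 subr_eq0 (introF eqP nz1) /= => /eqP.
Qed.

Section Circulant.
Variable n : nat.
Variable w : algC.
Hypothesis wP : n.-primitive_root w.
Let n0 : (0 < n)%N := prim_order_gt0 wP.
Variable f : nat -> algC.

Definition circ : 'M[algC]_n := \matrix_(g < n, h < n) f ((h + n - g) %% n).
Definition lam (k : nat) : algC := \sum_(s < n) f s * w ^+ (s * k).
Definition Fmx : 'M[algC]_n := \matrix_(i < n, j < n) w ^+ (i * j).
Definition Gmx : 'M[algC]_n := \matrix_(i < n, j < n) (n%:R^-1 * w^-1 ^+ (i * j)).

Lemma w_neq0 : w != 0.
Proof.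
apply/eqP=> w0; have := prim_expr_order wP; rewrite w0 expr0n.
case: eqP => [n00|_]; first by move: n0; rewrite n00.
by move/eqP; rewrite eq_sym oner_eq0.
Qed.

Lemma FG1 : Fmx *m Gmx = 1%:M.
Proof.
apply/matrixP=> i j; rewrite !mxE.
have -> : \sum_(k < n) Fmx i k * Gmx k j
    = n%:R^-1 * \sum_(k < n) (w ^+ i * w^-1 ^+ j) ^+ k.
  rewrite mulr_sumr; apply: eq_bigr => k _; rewrite !mxE.
  by rewrite mulrCA exprMn -!exprM mulnC [(k * j)%N]mulnC.
have wn : w ^+ n = 1 := prim_expr_order wP.
have zn : (w ^+ i * w^-1 ^+ j) ^+ n = 1.
  rewrite exprMn -!exprM mulnC [(j * n)%N]mulnC !exprM wn expr1n mul1r.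
  by rewrite exprVn wn invr1 expr1n.
rewrite geo_sum //.
have wu : w \is a GRing.unit by rewrite unitfE w_neq0.
have -> : (w ^+ i * w^-1 ^+ j == 1) = (i == j).
  have -> : (i == j) = (w ^+ i == w ^+ j).
    by rewrite (eq_prim_root_expr wP) !modn_small.
  rewrite exprVn; apply/eqP/eqP => [/divr1_eq //|->].
  by rewrite divff // expf_neq0 // w_neq0.
case: (i == j) => //=; last by rewrite mulr0.
by rewrite mulVf // pnatr_eq0 -lt0n n0.
Qed.

Lemma AF : circ *m Fmx = Fmx *m diag_mx (\row_k lam k).
Proof.
apply/matrixP=> g k; rewrite mul_mx_diag !mxE /lam mulr_sumr.
pose h (s : 'I_n) : 'I_n := Ordinal (ltn_pmod (s + g) n0).
have hinj : injective h.
  move=> s t /(congr1 val) /= /eqP; rewrite eqn_modDr !modn_small //.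
  by move/eqP/val_inj.
rewrite (reindex_inj hinj); apply: eq_bigr => s _; rewrite !mxE /=.
have -> : (((s + g) %% n + n - g) %% n = s)%N.
  rewrite -addnBA ?(ltnW (ltn_ord g)) // modnDml -addnA subnKC ?(ltnW (ltn_ord g)) //.
  by rewrite modnDr modn_small.
rewrite -(prim_expr_mod wP) modnMml (prim_expr_mod wP).
by rewrite mulrCA -exprD mulnDl addnC.
Qed.

Lemma circ_char : char_poly circ = \prod_(k < n) ('X - (lam k)%:P).
Proof.
have -> : circ = Fmx *m diag_mx (\row_k lam k) *m Gmx.
  by rewrite -AF -mulmxA FG1 mulmx1.
rewrite char_poly_conj ?FG1 // char_poly_trig ?diag_mx_is_trig //.
by apply: eq_bigr => k _; rewrite !mxE eqxx mulr1n.
Qed.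

End Circulant.

Lemma sum_mult (F : nat -> algC) e m : (0 < e)%N ->
  \sum_(0 <= s < e * m) ((e %| s)%:R * F s) = \sum_(0 <= t < m) F (e * t)%N.
Proof.
move=> e0.
elim: m => [|m IH]; first by rewrite muln0 !big_geq.
rewrite big_nat_recr //= -IH mulnS addnC (big_cat_nat _ (leq_addr _ _)) //=.
congr (_ + _).
rewrite -{1}[(e * m)%N]add0n big_addn addKn (big_ltn e0) /= add0n dvdn_mulr // mul1r.
rewrite big_nat_cond big1 ?addr0 // => i /andP[/andP[i1 ie] _].
by rewrite dvdn_addl ?dvdn_mulr // gtnNdvd ?mul0r.
Qed.

Section NT.
Local Open Scope nat_scope.
Variables p q : nat.
Hypotheses (pP : prime p) (qP : prime q) (pq : p != q).

Definition vp (s : nat) : nat :=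
  if p ^ 3 %| s then 3 else if p ^ 2 %| s then 2 else if p %| s then 1 else 0.
Definition wq (s : nat) : bool := q %| s.

Lemma p_gt0 : 0 < p. Proof. exact: prime_gt0. Qed.
Lemma q_gt0 : 0 < q. Proof. exact: prime_gt0. Qed.

Lemma cop_pq : coprime p q.
Proof. by rewrite prime_coprime // dvdn_prime2. Qed.

Lemma cop a b : coprime (p ^ a) (q ^ b).
Proof. by rewrite coprimeXl // coprimeXr // cop_pq. Qed.

Lemma vp_le3 s : vp s <= 3.
Proof. by rewrite /vp; repeat case: ifP. Qed.

Lemma dvd_vp s : p ^ vp s %| s.
Proof. by rewrite /vp; repeat case: ifP => //; rewrite expn1. Qed.

Lemma pexp_dvd c s : c <= 3 -> (p ^ c %| s) = (c <= vp s).
Proof.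
move=> c3; apply/idP/idP => [H|]; last first.
  by move=> cv; apply: dvdn_trans (dvd_vp s); apply: dvdn_exp2l.
rewrite /vp; case: ifP => [//|n3]; case: ifP => [_|n2].
  by move: c3; rewrite leq_eqVlt => /orP[/eqP c3|]; [rewrite c3 n3 in H|].
case: ifP => [_|n1].
  move: c3 H; case: c => [|[|[|[|]]]] //; by rewrite ?n3 ?n2.
move: c3 H; case: c => [|[|[|[|]]]] //; by rewrite ?n3 ?n2 ?expn1 ?n1.
Qed.

Lemma gcd_cls s : gcdn s (p ^ 3 * q) = p ^ vp s * q ^ wq s.
Proof.
apply: gcdn_def.
- rewrite Gauss_dvd ?cop // dvd_vp /wq /=; case E: (q %| s) => /=; by rewrite ?expn1 ?expn0 ?E ?dvd1n.
- apply: dvdn_mul; first by apply: dvdn_exp2l; apply: vp_le3.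
  by case: (wq s); rewrite ?expn1.
move=> d ds dn.
have pdvd : forall e, e %| p ^ 3 -> e %| s -> e %| p ^ vp s.
  move=> e /(dvdn_pfactor _ _ pP)[a a3 ->] pas.
  by apply: dvdn_exp2l; rewrite -pexp_dvd.
case qd: (q %| d).
  have [e de] : exists e, d = e * q by exists (d %/ q); rewrite divnK.
  rewrite de in ds dn *; rewrite dvdn_pmul2r ?q_gt0 // in dn.
  have qs : wq s by rewrite /wq; apply: dvdn_trans ds; apply: dvdn_mull.
  rewrite qs expn1 dvdn_pmul2r ?q_gt0 //; apply: pdvd => //.
  by apply: dvdn_trans ds; apply: dvdn_mulr.
have cdq : coprime d q by rewrite coprime_sym prime_coprime // qd.
rewrite Gauss_dvdl // in dn.
by apply: dvdn_mulr; apply: pdvd.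
Qed.

End NT.

Section FT.
Variables p q : nat.
Hypotheses (pP : prime p) (qP : prime q) (pq : p != q).
Local Notation n := (p ^ 3 * q)%N.
Variable w : algC.
Hypothesis wP : n.-primitive_root w.

Lemma T_sum a b k : (a <= 3)%N -> (b <= 1)%N ->
  \sum_(s < n) ((p ^ a %| s)%N%:R * (q ^ b %| s)%N%:R * w ^+ (s * k))
  = (p ^ (3 - a) * q ^ (1 - b))%N%:R *
    ((p ^ (3 - a) %| k) && (q ^ (1 - b) %| k))%N%:R.
Proof.
move=> a3 b1.
set e := (p ^ a * q ^ b)%N; set m := (p ^ (3 - a) * q ^ (1 - b))%N.
have e0 : (0 < e)%N by rewrite muln_gt0 !expn_gt0 (p_gt0 pP) (q_gt0 qP).
have em : n = (e * m)%N.
  by rewrite /e /m mulnACA -!expnD !subnKC.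
under eq_bigr do rewrite -natrM mulnb -Gauss_dvd ?(cop pP qP pq) //.
rewrite -(big_mkord xpredT (fun s => (e %| s)%:R * w ^+ (s * k))) em.
rewrite (sum_mult (fun s => w ^+ (s * k))) // big_mkord.
under eq_bigr do rewrite mulnC mulnA exprM.
rewrite geo_sum; last first.
  by rewrite -exprM -mulnA -em mulnC exprM (prim_expr_order wP) expr1n.
rewrite -(prim_order_dvd wP) em [(k * e)%N]mulnC dvdn_pmul2l // -Gauss_dvd ?(cop pP qP pq) //.
by case: (m %| k)%N => /=; rewrite ?mulr1 ?mulr0.
Qed.

Definition PPN a v : nat := (p ^ (3 - a) * (3 - a <= v))%N.
Definition QQN (b : nat) (wv : bool) : nat := (q ^ (1 - b) * (1 - b <= wv))%N.
Definition AhZ (i v : nat) : int := (PPN i v)%:Z - (i < 3)%N%:Z * (PPN i.+1 v)%:Z.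
Definition BhZ (j wv : bool) : int := (QQN j wv)%:Z - (~~ j)%N%:Z * (QQN 1 wv)%:Z.

Lemma natZR (m : nat) : (m%:Z)%:~R = m%:R :> algC.
Proof. by rewrite -pmulrn. Qed.

Lemma T_sum' a b k : (a <= 3)%N -> (b <= 1)%N ->
  \sum_(s < n) ((p ^ a %| s)%N%:R * (q ^ b %| s)%N%:R * w ^+ (s * k))
  = (PPN a (vp p k) * QQN b (wq q k))%N%:R.
Proof.
move=> a3 b1; rewrite T_sum // /PPN /QQN -natrM mulnACA mulnb.
rewrite -pexp_dvd // ?leq_subr //; congr (_ * _)%:R%N.
by case: b b1 => [|[|]] //= _; rewrite ?subn0 ?expn1 ?expn0 ?dvd1n /wq ?andbT //=; case: (q %| k)%N.
Qed.

Lemma sum4 (X1 X2 Y1 Y2 W : nat -> algC) (c d : algC) :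
  \sum_(s < n) ((X1 s - c * X2 s) * (Y1 s - d * Y2 s) * W s)
  = \sum_(s < n) (X1 s * Y1 s * W s) - d * \sum_(s < n) (X1 s * Y2 s * W s)
    - c * \sum_(s < n) (X2 s * Y1 s * W s) + c * d * \sum_(s < n) (X2 s * Y2 s * W s).
Proof.
rewrite !mulr_sumr -!sumrB -big_split /=; apply: eq_bigr => s _; ring.
Qed.

Lemma vp_eq i s : (i <= 3)%N ->
  ((vp p s == i)%N%:R : algC) = (p ^ i %| s)%N%:R - (i < 3)%N%:R * (p ^ i.+1 %| s)%N%:R.
Proof.
move=> i3; have v3 := vp_le3 p s.
case: (ltnP i 3) => [i3'|i3']; last first.
  have -> : i = 3 by apply/eqP; rewrite eqn_leq i3 i3'.
  rewrite mul0r subr0 pexp_dvd //; congr (_%:R).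
  by rewrite eqn_leq v3.
rewrite !pexp_dvd // mul1r.
have [lt|gt|eq] := ltngtP (vp p s) i; rewrite /= ?subrr ?subr0 //.

Qed.

Lemma wq_eq (j : bool) s :
  ((wq q s == j)%N%:R : algC) = (q ^ j %| s)%N%:R - (~~ j)%N%:R * (q ^ 1 %| s)%N%:R.
Proof.
rewrite /wq expn1; case: j => /=; rewrite ?expn1 ?mul0r ?subr0 ?eqb_id //.
by rewrite mul1r expn0 dvd1n; case: (q %| s)%N; rewrite ?subrr ?subr0.
Qed.

Lemma class_sum i (j : bool) k : (i <= 3)%N ->
  \sum_(s < n) (((vp p s == i) && (wq q s == j))%N%:R * w ^+ (s * k))
  = (AhZ i (vp p k) * BhZ j (wq q k))%:~R.
Proof.
move=> i3.
under eq_bigr do rewrite -mulnb natrM vp_eq // wq_eq.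
rewrite (sum4 (fun s => (p ^ i %| s)%N%:R) (fun s => (p ^ i.+1 %| s)%N%:R)
   (fun s => (q ^ j %| s)%N%:R) (fun s => (q ^ 1 %| s)%N%:R) (fun s => w ^+ (s * k))).
have jb : (j <= 1)%N by case: j.
rewrite /AhZ /BhZ !(intrM, intrB) !natZR.
case: (ltnP i 3) => [i3'|i3'].
  by rewrite !T_sum' // !natrM; ring.
by rewrite !mul0r !subr0 !addr0 !T_sum' // !natrM; ring.
Qed.
End FT.

Definition Tz (p : int) (z : nat -> int) (v : nat) : int :=
  match v with
  | 0 => z 3%N - z 2%N
  | 1 => z 3%N + (p - 1) * z 2%N - p * z 1%N
  | 2 => z 3%N + (p - 1) * z 2%N + (p ^+ 2 - p) * z 1%N - p ^+ 2 * z 0%N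
  | _ => z 3%N + (p - 1) * z 2%N + (p ^+ 2 - p) * z 1%N + (p ^+ 3 - p ^+ 2) * z 0%N
  end.
Definition cz (bt : nat -> bool -> bool) i : int := (bt i false)%:Z.
Definition xz (bt : nat -> bool -> bool) i : int := (bt i true)%:Z - (bt i false)%:Z.
Definition mpz (p : int) (v : nat) : int :=
  match v with 0 => p ^+ 3 - p ^+ 2 | 1 => p ^+ 2 - p | 2 => p - 1 | _ => 1 end.
Definition Xv p bt v := Tz p (xz bt) v.
Definition Zv p (q : int) bt v := Tz p (xz bt) v + q * Tz p (cz bt) v.
Definition ST p (q : int) bt (P : pred int) v : int :=
  mpz p v * ((q - 1) * (P (Xv p bt v))%:Z + (P (Zv p q bt v))%:Z).
Definition SS p (q : int) bt (P : pred int) : int :=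
  ST p q bt P 0 + ST p q bt P 1 + ST p q bt P 2 + ST p q bt P 3.
Definition M4 p (e : nat -> bool) : int :=
  mpz p 0 * (e 0)%:Z + mpz p 1 * (e 1)%:Z + mpz p 2 * (e 2)%:Z + mpz p 3 * (e 3)%:Z.

Lemma subset_sum (p : int) (e f : nat -> bool) : 3 <= p -> M4 p e = M4 p f ->
  forall v, (v < 4)%N -> e v = f v.
Proof.
rewrite /M4 /mpz => p3 H.
suff : [/\ e 0 = f 0, e 1 = f 1, e 2 = f 2 & e 3 = f 3]%N.
  by case=> ? ? ? ? [|[|[|[|]]]].
move: H.
case: (e 0); case: (e 1); case: (e 2); case: (e 3);
case: (f 0); case: (f 1); case: (f 2); case: (f 3) => //=;
rewrite ?expr2 ?exprS ?expr2 => H; exfalso; nia.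
Qed.

Lemma dvd_shift (q X Y r : int) : (q %| X + q * Y - r)%Z = (q %| X - r)%Z.
Proof.
have -> : X + q * Y - r = (X - r) + q * Y by ring.
by rewrite rpredDr // dvdz_mulr.
Qed.

Lemma modq_SS p q bt r :
  SS p q bt (fun z => (q %| z - r)%Z) = q * M4 p (fun v => (q %| Xv p bt v - r)%Z).
Proof.
rewrite /SS /ST /M4 /Zv /Xv !dvd_shift; ring.
Qed.

Lemma small_zero (q : nat) (t : int) : (q%:Z %| t)%Z -> - q%:Z < t -> t < q%:Z -> t = 0.
Proof.
case/dvdzP => k -> h1 h2.
have h0 : 0 <= q%:Z by [].
have [kp|[kn|k0]]: (1 <= k \/ k <= -1 \/ k = 0) by lia.
- nia.
- nia.
- by rewrite k0 mul0r.
Qed.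

Lemma gauss_p (p q : nat) k (t : int) : coprime p q ->
  (q%:Z %| p%:Z ^+ k * t)%Z -> (q%:Z %| t)%Z.
Proof.
move=> cpq; rewrite Gauss_dvdzr // coprimezXr //.
by rewrite coprimezE /= coprime_sym.
Qed.

Lemma digits (p q : nat) (d : nat -> int) : coprime p q -> (3 <= q)%N ->
  (forall i, (i < 4)%N -> -2 <= d i <= 2) ->
  (forall v, (v < 4)%N -> (q%:Z %| Tz p%:Z d v)%Z) ->
  forall i, (i < 4)%N -> d i = 0.
Proof.
move=> cpq q3 db dv.
have b0 := db 0%N isT; have b1 := db 1%N isT; have b2 := db 2%N isT; have b3 := db 3%N isT.
have sub : forall v, (v < 3)%N -> (q%:Z %| Tz p d v.+1 - Tz p d v)%Z.
  by move=> v v3; rewrite rpredB // dv // ltnW.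
have d0 : d 0%N = 0.
  apply: (small_zero (q := q)); try lia.
  apply: (gauss_p (k := 3) cpq).
  by have := sub 2%N isT; rewrite /Tz; congr (_ %| _)%Z; ring.
have d1 : d 1%N = 0.
  apply: (small_zero (q := q)); try lia.
  apply: (gauss_p (k := 2) cpq).
  by have := sub 1%N isT; rewrite /Tz d0; congr (_ %| _)%Z; ring.
have d2 : d 2%N = 0.
  apply: (small_zero (q := q)); try lia.
  apply: (gauss_p (k := 1) cpq).
  by have := sub 0%N isT; rewrite /Tz d1; congr (_ %| _)%Z; ring.
have d3 : d 3%N = 0.
  apply: (small_zero (q := q)); try lia.
  by have := dv 0%N isT; rewrite /Tz d2 subr0.
by case=> [|[|[|[|]]]].
Qed.

Lemma Tz_lin p (a b : nat -> int) v : Tz p (fun i => a i - b i) v = Tz p a v - Tz p b v.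
Proof. by case: v => [|[|[|v]]] /=; ring. Qed.

Lemma Tz_ext p (a b : nat -> int) v : (forall i, (i < 4)%N -> a i = b i) -> Tz p a v = Tz p b v.
Proof. by move=> e; rewrite /Tz !e. Qed.

Lemma SS_split p q bt t :
  SS p q bt (pred1 t) = (q - 1) * M4 p (fun v => Xv p bt v == t) + M4 p (fun v => Zv p q bt v == t).
Proof. rewrite /SS /ST /M4; ring. Qed.

Lemma M4_ext p (e f : nat -> bool) : (forall v, (v < 4)%N -> e v = f v) -> M4 p e = M4 p f.
Proof. by move=> h; rewrite /M4 !h. Qed.

Lemma xz_bound bt i : -1 <= xz bt i <= 1.
Proof. by rewrite /xz; case: (bt i true); case: (bt i false). Qed.
Lemma cz_bound bt i : 0 <= cz bt i <= 1.
Proof. by rewrite /cz; case: (bt i false). Qed.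

Lemma core3 (p q : nat) bt1 bt2 : prime p -> prime q -> (p < q)%N -> (3 <= p)%N ->
  (forall P, SS p q bt1 P = SS p q bt2 P) ->
  forall i, (i < 4)%N -> xz bt1 i = xz bt2 i /\ cz bt1 i = cz bt2 i.
Proof.
move=> pP qP pq p3 H.
have cpq : coprime p q by rewrite prime_coprime // dvdn_prime2 // neq_ltn pq.
have q3 : (3 <= q)%N := leq_trans (leqW p3) pq.
have qnz : q%:Z != 0 by rewrite eqz_nat -lt0n prime_gt0.
have p3z : 3 <= p%:Z by rewrite lez_nat.
have HM : forall r, M4 p (fun v => (q%:Z %| Xv p bt1 v - r)%Z) = M4 p (fun v => (q%:Z %| Xv p bt2 v - r)%Z).
  by move=> r; apply: (mulfI qnz); rewrite -!modq_SS H.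
have HX : forall v, (v < 4)%N -> (q%:Z %| Tz p (fun i => xz bt1 i - xz bt2 i) v)%Z.
  move=> v v4; have := subset_sum p3z (HM (Xv p bt1 v)) v4.
  rewrite subrr dvdz0 Tz_lin => /esym e.
  by rewrite -opprB rpredN.
have ex : forall i, (i < 4)%N -> xz bt1 i = xz bt2 i.
  move=> i i4; apply/eqP; rewrite -subr_eq0; apply/eqP; move: i i4.
  apply: (digits cpq q3) HX => j _.
  by have := xz_bound bt1 j; have := xz_bound bt2 j; lia.
have eX : forall v, Xv p bt1 v = Xv p bt2 v by move=> v; apply: Tz_ext.
have HZ : forall t, M4 p (fun v => Zv p q bt1 v == t) = M4 p (fun v => Zv p q bt2 v == t).
  move=> t; have := H (pred1 t); rewrite !SS_split.
  rewrite (@M4_ext p (fun v => Xv p bt1 v == t) (fun v => Xv p bt2 v == t)); last first.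
    by move=> v _; rewrite eX.
  by move/addrI.
have eZ : forall v, (v < 4)%N -> Zv p q bt1 v = Zv p q bt2 v.
  move=> v v4; have := subset_sum p3z (HZ (Zv p q bt1 v)) v4.
  by rewrite eqxx => /esym/eqP.
have ec : forall i, (i < 4)%N -> cz bt1 i = cz bt2 i.
  move=> i i4; apply/eqP; rewrite -subr_eq0; apply/eqP; move: i i4.
  apply: (digits cpq q3) => [j _|v v4].
    by have := cz_bound bt1 j; have := cz_bound bt2 j; lia.
  have := eZ v v4; rewrite /Zv -/(Xv p bt1 v) -/(Xv p bt2 v) eX => /addrI /(mulfI qnz) e.
  by rewrite Tz_lin e subrr dvdz0.
by move=> i i4; split; [apply: ex | apply: ec].
Qed.

Fixpoint allb (m : nat) : seq (seq bool) :=
  if m is m'.+1 then [seq b :: s | b <- [:: false; true], s <- allb m'] else [:: [::]].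
Definition Lall := allb 7.

Definition btOf (s : seq bool) : nat -> bool -> bool :=
  fun i j => if j then (if (i < 3)%N then nth false s (4 + i) else false) else nth false s i.
Definition sOf (bt : nat -> bool -> bool) : seq bool :=
  [:: bt 0%N false; bt 1%N false; bt 2%N false; bt 3%N false; bt 0%N true; bt 1%N true; bt 2%N true].

Lemma mem_Lall (a b c d e f g : bool) : [:: a; b; c; d; e; f; g] \in Lall.
Proof. by case: a; case: b; case: c; case: d; case: e; case: f; case: g. Qed.

Definition pcG (K : eqType) (d : seq (K * int)) (t : K) : int :=
  foldr (fun x acc => (x.1 == t)%:Z * x.2 + acc) 0 d.
Definition condG (K : eqType) (d1 d2 : seq (K * int)) : bool :=
  all (fun t => pcG d1 t == pcG d2 t) (map fst d1 ++ map fst d2).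
Definition chkG (K : eqType) (D : seq (seq bool * seq (K * int))) : bool :=
  all (fun x => all (fun y => condG x.2 y.2 ==> (x.1 == y.1)) D) D.

Lemma chkGP (K : eqType) (dat : seq bool -> seq (K * int)) s1 s2 :
  chkG [seq (s, dat s) | s <- Lall] -> s1 \in Lall -> s2 \in Lall ->
  (forall t, pcG (dat s1) t = pcG (dat s2) t) -> s1 = s2.
Proof.
move=> /allP ch m1 m2 e.
have /allP := ch _ (map_f (fun s => (s, dat s)) m1).
move=> /(_ _ (map_f (fun s => (s, dat s)) m2)) /= /implyP h.
by apply/eqP; apply: h; apply/allP => t _; rewrite e.
Qed.

Definition dataA (q : int) (s : seq bool) : seq (int * int) :=
  let b := btOf s in
  [seq (Xv (Posz 2) b v, (q - 1) * mpz (Posz 2) v) | v <- iota 0 4] ++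
  [seq (Zv (Posz 2) q b v, mpz (Posz 2) v) | v <- iota 0 4].
Definition dataB (s : seq bool) : seq ((int * int) * int) :=
  let b := btOf s in
  [seq ((Xv (Posz 2) b v, Tz (Posz 2) (cz b) v), mpz (Posz 2) v) | v <- iota 0 4].

Lemma chkA3 : chkG [seq (s, dataA 3 s) | s <- Lall]. Proof. by vm_compute. Qed.

Lemma pcA q s t : pcG (dataA q s) t = SS (Posz 2) q (btOf s) (pred1 t).
Proof. rewrite /pcG /dataA /SS /ST /=; ring. Qed.

Definition PC p bt a b : int :=
  M4 p (fun v => (Xv p bt v == a) && (Tz p (cz bt) v == b)).

Lemma pcB s a b : pcG (dataB s) (a, b) = PC (Posz 2) (btOf s) a b.
Proof. rewrite /pcG /dataB /PC /M4 /= !xpair_eqE; ring. Qed.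

Lemma btOf_sOf bt : bt 3%N true = false ->
  forall i j, (i < 4)%N -> btOf (sOf bt) i j = bt i j.
Proof. by move=> h [|[|[|[|]]]] [] //= _; rewrite h. Qed.

Lemma SS_ext p q bt bt' P : (forall i j, (i < 4)%N -> bt i j = bt' i j) ->
  SS p q bt P = SS p q bt' P.
Proof.
move=> e.
have ex : forall v, Tz p (xz bt) v = Tz p (xz bt') v.
  by move=> v; apply: Tz_ext => i i4; rewrite /xz !e.
have ec : forall v, Tz p (cz bt) v = Tz p (cz bt') v.
  by move=> v; apply: Tz_ext => i i4; rewrite /cz !e.
by rewrite /SS /ST /Xv /Zv !ex !ec.
Qed.

Lemma PC_ext p bt bt' a b : (forall i j, (i < 4)%N -> bt i j = bt' i j) ->
  PC p bt a b = PC p bt' a b.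
Proof.
move=> e.
have ex : forall v, Tz p (xz bt) v = Tz p (xz bt') v.
  by move=> v; apply: Tz_ext => i i4; rewrite /xz !e.
have ec : forall v, Tz p (cz bt) v = Tz p (cz bt') v.
  by move=> v; apply: Tz_ext => i i4; rewrite /cz !e.
by rewrite /PC; apply: M4_ext => v _; rewrite /Xv ex ec.
Qed.

Lemma sOf_eq bt1 bt2 : bt1 3%N true = false -> bt2 3%N true = false ->
  sOf bt1 = sOf bt2 -> forall i j, (i < 4)%N -> bt1 i j = bt2 i j.
Proof.
move=> h1 h2 [] e0 e1 e2 e3 e4 e5 e6 [|[|[|[|]]]] [] //=; by rewrite ?h1 ?h2.
Qed.

Lemma Xv2_bound bt v : -8 <= Xv (Posz 2) bt v <= 8.
Proof.
have b0 := xz_bound bt 0; have b1 := xz_bound bt 1; have b2 := xz_bound bt 2; have b3 := xz_bound bt 3.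
rewrite /Xv /Tz; case: v => [|[|[|v]]]; rewrite /= ?(exprS, expr0); lia.
Qed.

Lemma dvd_eq_small (q : nat) (X t : int) : (17 <= q)%N -> -8 <= X <= 8 -> -8 <= t <= 8 ->
  (q%:Z %| X - t)%Z = (X == t).
Proof.
move=> q17 hX ht; apply/idP/eqP => [h|->]; last by rewrite subrr dvdz0.
apply/eqP; rewrite -subr_eq0; apply/eqP; apply: (small_zero h); lia.
Qed.

Lemma Z_eq_pair (q : nat) (X Y a b : int) : (17 <= q)%N -> -8 <= X <= 8 -> -8 <= a <= 8 ->
  (X + q%:Z * Y == a + q%:Z * b) = (X == a) && (Y == b).
Proof.
move=> q17 hX ha; apply/eqP/andP => [e|[/eqP -> /eqP ->] //].
have d : (q%:Z %| X - a)%Z.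
  have -> : X - a = q%:Z * (b - Y) by move: e; lia.
  by apply: dvdz_mulr; apply: dvdzz.
have xa : X = a.
  apply/eqP; rewrite -subr_eq0; apply/eqP; apply: (small_zero d); lia.
split; apply/eqP => //; move: e; rewrite xa => /addrI /mulfI -> //.
by rewrite eqz_nat -lt0n; apply: leq_trans q17.
Qed.

Lemma core2b (q : nat) bt1 bt2 : (17 <= q)%N -> bt1 3%N true = false -> bt2 3%N true = false ->
  (forall P, SS (Posz 2) q bt1 P = SS (Posz 2) q bt2 P) ->
  forall i j, (i < 4)%N -> bt1 i j = bt2 i j.
Proof.
move=> q17 h1 h2 H.
have qnz : q%:Z != 0 by rewrite eqz_nat -lt0n; apply: leq_trans q17.
have HM : forall r, M4 (Posz 2) (fun v => (q%:Z %| Xv (Posz 2) bt1 v - r)%Z)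
                  = M4 (Posz 2) (fun v => (q%:Z %| Xv (Posz 2) bt2 v - r)%Z).
  by move=> r; apply: (mulfI qnz); rewrite -!modq_SS H.
have HA : forall t, M4 (Posz 2) (fun v => Xv (Posz 2) bt1 v == t)
                  = M4 (Posz 2) (fun v => Xv (Posz 2) bt2 v == t).
  move=> t; case: (boolP (-8 <= t <= 8)) => tb.
    rewrite (@M4_ext _ _ (fun v => (q%:Z %| Xv (Posz 2) bt1 v - t)%Z)); last first.
      by move=> v _; rewrite dvd_eq_small // Xv2_bound.
    rewrite (@M4_ext _ (fun v => Xv (Posz 2) bt2 v == t) (fun v => (q%:Z %| Xv (Posz 2) bt2 v - t)%Z)); last first.
      by move=> v _; rewrite dvd_eq_small // Xv2_bound.
    exact: HM.
  rewrite (@M4_ext _ _ (fun _ => false)); last first.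
    move=> v _; apply/eqP => e; move: tb; rewrite -e; have := Xv2_bound bt1 v; lia.
  rewrite (@M4_ext _ (fun v => Xv (Posz 2) bt2 v == t) (fun _ => false)) //.
  move=> v _; apply/eqP => e; move: tb; rewrite -e; have := Xv2_bound bt2 v; lia.
have HZ : forall t, M4 (Posz 2) (fun v => Zv (Posz 2) q bt1 v == t)
                  = M4 (Posz 2) (fun v => Zv (Posz 2) q bt2 v == t).
  by move=> t; have := H (pred1 t); rewrite !SS_split HA => /addrI.
have HP : forall a b, PC (Posz 2) bt1 a b = PC (Posz 2) bt2 a b.
  move=> a b; case: (boolP (-8 <= a <= 8)) => ab.
    rewrite /PC (@M4_ext _ _ (fun v => Zv (Posz 2) q bt1 v == a + q%:Z * b)); last first.
      by move=> v _; rewrite /Zv Z_eq_pair // Xv2_bound.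
    rewrite (@M4_ext _ (fun v => (Xv (Posz 2) bt2 v == a) && (Tz (Posz 2) (cz bt2) v == b))
                 (fun v => Zv (Posz 2) q bt2 v == a + q%:Z * b)); last first.
      by move=> v _; rewrite /Zv Z_eq_pair // Xv2_bound.
    exact: HZ.
  rewrite /PC (@M4_ext _ _ (fun _ => false)); last first.
    move=> v _; apply/andP => -[/eqP e _]; move: ab; rewrite -e; have := Xv2_bound bt1 v; lia.
  rewrite (@M4_ext _ (fun v => (Xv (Posz 2) bt2 v == a) && (Tz (Posz 2) (cz bt2) v == b)) (fun _ => false)) //.
  move=> v _; apply/andP => -[/eqP e _]; move: ab; rewrite -e; have := Xv2_bound bt2 v; lia.
apply: sOf_eq => //.
apply: (@chkGP _ dataB); [by vm_compute | exact: mem_Lall | exact: mem_Lall |].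
case=> a b; rewrite !pcB (PC_ext _ _ _ (btOf_sOf h1)) (PC_ext _ _ _ (btOf_sOf h2)).
exact: HP.
Qed.

Lemma core2s (q : nat) bt1 bt2 : chkG [seq (s, dataA (Posz q) s) | s <- Lall] ->
  bt1 3%N true = false -> bt2 3%N true = false ->
  (forall P, SS (Posz 2) q bt1 P = SS (Posz 2) q bt2 P) ->
  forall i j, (i < 4)%N -> bt1 i j = bt2 i j.
Proof.
move=> ch h1 h2 H; apply: sOf_eq => //.
apply: (@chkGP _ (dataA (Posz q))); [exact: ch | exact: mem_Lall | exact: mem_Lall |].
move=> t; rewrite !pcA (SS_ext _ _ _ (btOf_sOf h1)) (SS_ext _ _ _ (btOf_sOf h2)).
exact: H.
Qed.

Lemma chkA5 : chkG [seq (s, dataA 5 s) | s <- Lall]. Proof. by vm_compute. Qed.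
Lemma chkA7 : chkG [seq (s, dataA 7 s) | s <- Lall]. Proof. by vm_compute. Qed.
Lemma chkA11 : chkG [seq (s, dataA 11 s) | s <- Lall]. Proof. by vm_compute. Qed.
Lemma chkA13 : chkG [seq (s, dataA 13 s) | s <- Lall]. Proof. by vm_compute. Qed.


Theorem core (p q : nat) bt1 bt2 : prime p -> prime q -> (p < q)%N ->
  bt1 3%N true = false -> bt2 3%N true = false ->
  (forall P, SS p q bt1 P = SS p q bt2 P) ->
  forall i j, (i < 4)%N -> bt1 i j = bt2 i j.
Proof.
move=> pP qP pq h1 h2 H.
case: (ltnP p 3) => [p3|p3].
  have p2 : p = 2%N by case: p pP p3 pq H => [|[|[|]]].
  subst p.
  case: (ltnP q 17) => [q17|q17]; last first.   exact: (core2b q17 h1 h2 H).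
  have key : forall r, (r < 17)%N -> (2 < r)%N -> prime r -> r \in [:: 3; 5; 7; 11; 13]%N.
    by do 17! case=> //.
  have := key q q17 pq qP.
  rewrite !inE => /orP[/eqP qe|/orP[/eqP qe|/orP[/eqP qe|/orP[/eqP qe|/eqP qe]]]];
    subst q; apply: core2s => //.
  - exact: chkA3.
  - exact: chkA5.
  - exact: chkA7.
  - exact: chkA11.
  - exact: chkA13.
have := core3 pP qP pq p3 H => e i j i4.
have [ex ec] := e i i4.
move: ex ec; rewrite /xz /cz => ex ec.
case: j.
  move: ex; rewrite ec => /addIr.
  by case: (bt1 i true); case: (bt2 i true).
by move: ec; case: (bt1 i false); case: (bt2 i false).
Qed.

Definition VZ p q (bt : nat -> bool -> bool) (v : nat) (wv : bool) : int :=
  \sum_(i < 4) \sum_(j : bool) (bt i j)%:Z * AhZ p i v * BhZ q j wv.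

Lemma VZ_eq p q bt v (wv : bool) : (v <= 3)%N ->
  VZ p q bt v wv = Tz p%:Z (xz bt) v + wv%:Z * q%:Z * Tz p%:Z (cz bt) v.
Proof.
move=> v3.
rewrite /VZ !big_ord_recr big_ord0 /= !big_bool /= /AhZ /BhZ /PPN /QQN /xz /cz.
case: v v3 => [|[|[|[|]]]] // _; case: wv => /=; rewrite ?PoszM ?natrX; ring.
Qed.

Lemma VZ_X p q bt v : (v <= 3)%N -> VZ p q bt v false = Xv p bt v.
Proof. by move=> v3; rewrite VZ_eq //= !mul0r addr0. Qed.

Lemma VZ_Z p q bt v : (v <= 3)%N -> VZ p q bt v true = Zv p q bt v.
Proof. by move=> v3; rewrite VZ_eq //= mul1r. Qed.

Lemma AhZ3 p v : (v <= 3)%N -> AhZ p v 3 = mpz p v.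
Proof.
rewrite /AhZ /PPN /mpz; case: v => [|[|[|[|]]]] //= _; rewrite ?PoszM ?natrX; ring.
Qed.

Lemma sum_SS p q bt (P : pred int) :
  \sum_(i < 4) \sum_(j : bool) AhZ p i 3 * BhZ q j true * (P (VZ p q bt i j))%:Z
  = SS p q bt P.
Proof.
rewrite !big_ord_recr big_ord0 /= !big_bool /=.
rewrite !VZ_X // !VZ_Z // !AhZ3 // /SS /ST /BhZ /QQN /=.
rewrite ?PoszM ?natrX /=; ring.
Qed.

Definition fD (D : seq nat) (n : nat) : nat -> algC := fun s => ((gcdn s n \in D)%:R).
Definition btD (p q : nat) (D : seq nat) : nat -> bool -> bool := fun i j => (p ^ i * q ^ j \in D)%N.

Lemma count_natr (T : Type) (a : pred T) (s : seq T) :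
  (count a s)%:R = \sum_(x <- s) ((a x)%:R : algC).
Proof.
elim: s => [|x s IH]; first by rewrite big_nil.
by rewrite big_cons /= natrD IH.
Qed.

Section Glue.
Variables p q : nat.
Hypotheses (pP : prime p) (qP : prime q) (pq : p != q).
Local Notation n := (p ^ 3 * q)%N.
Variable w : algC.
Hypothesis wP : n.-primitive_root w.

Lemma cls_expand (g : nat -> bool -> algC) s :
  g (vp p s) (wq q s) = \sum_(i < 4) \sum_(j : bool) g i j * ((vp p s == i) && (wq q s == j))%:R.
Proof.
rewrite !big_ord_recr big_ord0 /= !big_bool /=.
move: (vp_le3 p s); case: (vp p s) => [|[|[|[|]]]] // _; case: (wq q s) => /=; ring.
Qed.

Lemma lam_VZ D k : lam n w (fD D n) k = (VZ p q (btD p q D) (vp p k) (wq q k))%:~R.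
Proof.
rewrite /lam.
under eq_bigr => s _ do rewrite /fD gcd_cls // (cls_expand (fun i j => (btD p q D i j)%:R)) mulr_suml.
rewrite exchange_big /=; rewrite /VZ rmorph_sum; apply: eq_bigr => i _.
under eq_bigr => s _ do rewrite mulr_suml.
rewrite exchange_big /=; rewrite rmorph_sum; apply: eq_bigr => j _.
under eq_bigr => s _ do rewrite -mulrA.
rewrite -mulr_sumr class_sum // ?(leq_ord i) //.
by rewrite !rmorphM /= ?intrM natZR mulrA.
Qed.

Lemma count_VZ bt (P : pred int) :
  ((count P [seq VZ p q bt (vp p k) (wq q k) | k <- iota 0 n])%:R : algC)
  = (\sum_(i < 4) \sum_(j : bool) AhZ p i 3 * BhZ q j true * (P (VZ p q bt i j))%:Z)%:~R.
Proof.
rewrite count_natr big_map.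
have -> : iota 0 n = index_iota 0 n by rewrite /index_iota subn0.
rewrite big_mkord.
under eq_bigr => k _ do rewrite (cls_expand (fun i j => (P (VZ p q bt i j))%:R)).
rewrite exchange_big /= rmorph_sum; apply: eq_bigr => i _.
rewrite exchange_big /= rmorph_sum; apply: eq_bigr => j _.
rewrite -mulr_sumr.
have -> : \sum_(k < n) ((vp p k == i) && (wq q k == j))%:R =
          \sum_(k < n) (((vp p k == i) && (wq q k == j))%:R * w ^+ (k * 0)).
  by apply: eq_bigr => k _; rewrite muln0 expr0 mulr1.
rewrite class_sum // ?(leq_ord i) //.
have -> : vp p 0 = 3%N by rewrite /vp dvdn0.
have -> : wq q 0 = true by rewrite /wq dvdn0.
by rewrite !rmorphM /= ?intrM mulrC.
Qed.
End Glue.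

Theorem theorem1p4 (p q : nat) (D1 D2 : seq nat) :
  prime p -> prime q -> (p < q)%N ->
  let n := (p ^ 3 * q)%N in
  {subset D1 <= [pred d | (d %| n)%N && (d != n)]} ->
  {subset D2 <= [pred d | (d %| n)%N && (d != n)]} ->
  Spec (ICG_adj n D1) = Spec (ICG_adj n D2) ->
  D1 =i D2.
Proof.
move=> pP qP pq n S1 S2 HS.
have pnq : p != q by rewrite neq_ltn pq.
have n0 : (0 < n)%N by rewrite muln_gt0 expn_gt0 !prime_gt0.
have [w wP] := C_prim_root_exists n0.
have adj : forall D, ICG_adj n D = circ n (fD D n).
  by move=> D; apply/matrixP => i j; rewrite !mxE.
have specE : forall D mu,
    Spec (ICG_adj n D) mu = count_mem mu [seq lam n w (fD D n) k | k <- iota 0 n].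
  move=> D mu; rewrite /Spec adj (circ_char wP) -mu_prod_XsubC big_map.
  have -> : iota 0 n = index_iota 0 n by rewrite /index_iota subn0.
  by rewrite big_mkord.
have perm1 : perm_eq [seq lam n w (fD D1 n) k | k <- iota 0 n]
                     [seq lam n w (fD D2 n) k | k <- iota 0 n].
  by apply/allP => x _; apply/eqP; rewrite -!specE HS.
have perm2 : perm_eq [seq VZ p q (btD p q D1) (vp p k) (wq q k) | k <- iota 0 n]
                     [seq VZ p q (btD p q D2) (vp p k) (wq q k) | k <- iota 0 n].
  apply: (@perm_map_inj _ _ (fun z : int => (z%:~R : algC)) (@intr_inj algC)).
  rewrite -!map_comp.
  have e : forall D, map ((fun z : int => (z%:~R : algC)) \o (fun k => VZ p q (btD p q D) (vp p k) (wq q k))) (iota 0 n)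
                  = map (lam n w (fD D n)) (iota 0 n).
    by move=> D; apply: eq_map => k /=; rewrite lam_VZ.
  by rewrite !e.
have HSS : forall P, SS p q (btD p q D1) P = SS p q (btD p q D2) P.
  move=> P; apply: (@intr_inj algC); rewrite -!sum_SS -!(count_VZ pP qP pnq wP).
  by move/permP: perm2 => /(_ P) ->.
have b3 : forall D, {subset D <= [pred d | (d %| n)%N && (d != n)]} ->
    btD p q D 3 true = false.
  move=> D S; apply/negP => /S /andP[_]; by rewrite /= expn1 eqxx.
have bits := core pP qP pq (b3 _ S1) (b3 _ S2) HSS.
move=> d.
case h: ((d \in D1) || (d \in D2)); last first.
  by move/norP: h => [/negbTE -> /negbTE ->].
have dn : (d %| n)%N by case/orP: h => [/S1|/S2] /andP[].
move: (bits (vp p d) (wq q d) (vp_le3 p d)).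
by rewrite /btD -gcd_cls // (gcdn_idPl dn).
Qed.
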